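(* Let $(X,Y)\sim P_{X,Y}$ be random variables taking values in $\mathcal{X}\times\mathcal{Y}$, where $|\mathcal{X}|=2$ and $\mathcal{Y}$ is a finite (discrete) set. For any natural number $L\geq 2$, there exists a random variable $Z$, jointly distributed with $(X,Y)$, taking values in a set $\mathcal{Z}$ of cardinality $|\mathcal{Z}|=L$, such that the joint distribution of $(X,Z,Y)$ has $(X,Y)$-marginal equal to $P_{X,Y}$, $X-Z-Y$ form a Markov chain in this order, and \[ I(X;Z)-I(X;Y)\leq 128\,L^{-2}. \]
   Context: All logarithms (and hence mutual informations) are to the natural base. *)

(* Defs.v *)
From HB Require Import structures.
From mathcomp Require Import all_boot all_order all_algebra.
From mathcomp Require Import reals exp.
Set Implicit Arguments. Unset Strict Implicit. Unset Printing Implicit Defensive.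
Import Order.TTheory GRing.Theory Num.Theory.
Local Open Scope ring_scope.

Section Info.
Variable R : realType.

Definition is_pmf (T : finType) (p : {ffun T -> R}) : Prop :=
  (forall t, 0 <= p t) /\ \sum_t p t = 1.

Definition marg1 (A B : finType) (p : {ffun A * B -> R}) (a : A) : R :=
  \sum_b p (a, b).
Definition marg2 (A B : finType) (p : {ffun A * B -> R}) (b : B) : R :=
  \sum_a p (a, b).

Definition mutinfo (A B : finType) (p : {ffun A * B -> R}) : R :=
  \sum_(ab : A * B)
    (if 0 < p ab
     then p ab * ln (p ab / (marg1 p ab.1 * marg2 p ab.2))
     else 0).

Definition pXY (A C B : finType) (q : {ffun A * C * B -> R}) : {ffun A * B -> R} :=
  [ffun ab => \sum_c q (ab.1, c, ab.2)].
Definition pXZ (A C B : finType) (q : {ffun A * C * B -> R}) : {ffun A * C -> R} :=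
  [ffun ac => \sum_b q (ac.1, ac.2, b)].
Definition pZY (A C B : finType) (q : {ffun A * C * B -> R}) : {ffun C * B -> R} :=
  [ffun cb => \sum_a q (a, cb.1, cb.2)].
Definition pZ (A C B : finType) (q : {ffun A * C * B -> R}) (c : C) : R :=
  \sum_a \sum_b q (a, c, b).

Definition markov_XZY (A C B : finType) (q : {ffun A * C * B -> R}) : Prop :=
  forall a c b, q (a, c, b) * pZ q c = pXZ q (a, c) * pZY q (c, b).

End Info.

(* Main.v *)
Require Import Defs.
From HB Require Import structures.
From mathcomp Require Import all_boot all_order all_algebra.
From mathcomp Require Import reals exp.
From mathcomp Require Import ring lra zify.
Import Order.TTheory GRing.Theory Num.Theory.
Local Open Scope ring_scope.
Set Implicit Arguments. Unset Strict Implicit. Unset Printing Implicit Defensive.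

Section Scalar.
Variable R : realType.

Definition ell (u v : R) : R := if 0 < u then u * ln (u / v) else 0.

Lemma ln_le_sub1 (x : R) : 0 < x -> ln x <= x - 1.
Proof.
move=> x0; have := @le_ln1Dx R (x - 1).
have -> : 1 + (x - 1) = x by ring.
apply; lra.
Qed.

Lemma ell_bound (u s p : R) : 0 <= u -> 0 < s -> 0 < p ->
  ell u p <= (u - s) ^+ 2 / s + (u - s) + u * ln (s / p).
Proof.
move=> u0 s0 p0; rewrite /ell.
have e : (u - s) ^+ 2 / s + (u - s) = u * (u / s - 1).
  by field; rewrite gt_eqF.
case: ifP => up.
  have -> : u / p = (u / s) * (s / p) by field; rewrite !gt_eqF.
  rewrite lnM ?posrE ?divr_gt0 // mulrDr e lerD2r.
  by rewrite ler_wpM2l // ln_le_sub1 // divr_gt0.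
have -> : u = 0 by apply/eqP; rewrite eq_le u0 andbT leNgt up.
rewrite mul0r addr0 sub0r sqrrN; apply: le_trans (_ : s - s <= _).
  by rewrite subrr.
by rewrite lerD2r expr2 mulrK // unitfE gt_eqF.
Qed.

Lemma jensen_chi2 (I : finType) (mu u : I -> R) (p : R) :
  (forall i, 0 <= mu i) -> \sum_i mu i = 1 -> (forall i, 0 <= u i) -> (0 < \sum_i mu i * u i -> 0 < p) ->
  \sum_i mu i * ell (u i) p - ell (\sum_i mu i * u i) p <=
  (if 0 < \sum_i mu i * u i then \sum_i mu i * ((u i - \sum_j mu j * u j) ^+ 2 / (\sum_j mu j * u j)) else 0).
Proof.
move=> mu0 mu1 u0 p0.
set s := \sum_j mu j * u j.
have s0 : 0 <= s by rewrite sumr_ge0 // => i _; rewrite mulr_ge0.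
case: ifP => sp.
  move: (p0 sp) => {}p0.
  rewrite lerBlDr.
  apply: le_trans (_ : \sum_i mu i * ((u i - s) ^+ 2 / s + (u i - s) + u i * ln (s / p)) <= _).
    by apply: ler_sum => i _; rewrite ler_wpM2l // ell_bound.
  rewrite (eq_bigr (fun i => mu i * ((u i - s) ^+ 2 / s) + (mu i * u i - s * mu i) + (mu i * u i) * ln (s / p))); last first.
    by move=> i _; ring.
  rewrite !big_split /= sumrN -mulr_sumr mu1 mulr1 -/s subrr addr0 -mulr_suml -/s.
  by rewrite /ell sp.
have s00 : s = 0 by apply/eqP; rewrite eq_le s0 andbT leNgt sp.
have h : forall i, mu i * u i = 0.
  move=> i; move/eqP: s00; rewrite /s psumr_eq0; last by move=> j _; rewrite mulr_ge0.
  by move=> /allP /(_ i (mem_index_enum i)) /implyP /(_ isT) /eqP.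
rewrite s00.
rewrite big1 ?sub0r /ell ?ltxx ?oppr0 //.
move=> i _; have := h i; move/eqP; rewrite mulf_eq0 => /orP[/eqP->|/eqP->]; first by rewrite mul0r.
by rewrite ltxx mulr0.
Qed.

Lemma mi_term (a b c : R) : 0 <= a -> 0 <= b ->
  (if 0 < a * b then a * b * ln (a * b / (c * b)) else 0) = b * ell a c.
Proof.
move=> a0 b0; rewrite /ell; have [b00|bn0] := eqVneq b 0.
  by rewrite b00 !mulr0 ltxx mul0r.
have bp : 0 < b by rewrite lt_def bn0 b0.
rewrite pmulr_lgt0 //; case: ifP => _; last by rewrite mulr0.
by rewrite invfM mulrACA divff // mulr1; ring.
Qed.

End Scalar.

Lemma sum_pair (R : realType) (A B : finType) (G : A * B -> R) :
  \sum_p G p = \sum_a \sum_b G (a, b).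
Proof. by rewrite pair_bigA; apply: eq_bigr; case. Qed.

Lemma sum_ind (R : realType) (L j : nat) (c : R) : (j < L)%N ->
  \sum_(z < L) (if (z : nat) == j then c else 0) = c.
Proof.
move=> hj; rewrite (bigD1 (Ordinal hj)) //= eqxx big1 ?addr0 //.
move=> z hz; rewrite ifF //; apply: contraNF hz => /eqP h.
by apply/eqP/val_inj.
Qed.

Section Main.
Variables (R : realType) (X Y : finType) (P : {ffun X * Y -> R}) (L N : nat).
Variables (g : nat -> R) (x0 x1 : X) (idx : Y -> nat).
Hypothesis hx01 : x1 != x0.
Hypothesis hXall : forall x, x != x0 -> x = x1.
Hypothesis hP : is_pmf P.
Hypothesis hNL : (N < L)%N.
Hypothesis g01 : forall i, 0 <= g i <= 1.
Hypothesis ginc : forall i, (i < N)%N -> g i < g i.+1.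

Definition w y := \sum_x P (x, y).
Definition t y := P (x0, y) / w y.

Lemma sumX (f : X -> R) : \sum_x f x = f x0 + f x1.
Proof.
rewrite (bigD1 x0) //= (bigD1 x1) //= big1 ?addr0 // => x /andP[h0 h1].
by move: (hXall h0) h1 => ->; rewrite eqxx.
Qed.

Lemma P0 x y : 0 <= P (x, y). Proof. by case: hP. Qed.

Lemma w_ge0 y : 0 <= w y.
Proof. by rewrite /w sumr_ge0 // => x _; apply: P0. Qed.

Lemma wE y : w y = P (x0, y) + P (x1, y).
Proof. by rewrite /w sumX. Qed.

Lemma w_t y : w y * t y = P (x0, y).
Proof.
rewrite /t; have [w0|wn0] := eqVneq (w y) 0.
  rewrite w0 mul0r; have := P0 x0 y; have := P0 x1 y; move: (wE y) => e; lra.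
by rewrite mulrC divfK.
Qed.

Lemma t01 y : 0 <= t y <= 1.
Proof.
rewrite /t; have [->|wn0] := eqVneq (w y) 0; first by rewrite invr0 mulr0 lexx ler01.
have wp : 0 < w y by rewrite lt_def wn0 w_ge0.
apply/andP; split; first by rewrite divr_ge0 ?P0 ?w_ge0.
rewrite ler_pdivrMr // mul1r wE.
by have := P0 x1 y; lra.
Qed.

Hypothesis hidx : forall y, (idx y < N)%N /\ g (idx y) <= t y <= g (idx y).+1.

Definition lam y := (g (idx y).+1 - t y) / (g (idx y).+1 - g (idx y)).
Definition mu y (z : 'I_L) : R :=
  if (z : nat) == idx y then lam y else if (z : nat) == (idx y).+1 then 1 - lam y else 0.
Definition r (z : 'I_L) x : R := if x == x0 then g z else 1 - g z.
Definition Q : {ffun X * 'I_L * Y -> R} :=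
  [ffun q => w q.2 * mu q.2 q.1.2 * r q.1.2 q.1.1].

Lemma lam01 y : 0 <= lam y <= 1.
Proof.
have [hi /andP[h1 h2]] := hidx y; have := ginc hi => hlt.
rewrite /lam divr_ge0 ?subr_ge0 //=; last by apply: ltW.
by rewrite ler_pdivrMr ?subr_gt0 // mul1r; lra.
Qed.

Lemma mu_ge0 y z : 0 <= mu y z.
Proof. by have := lam01 y; rewrite /mu; case: ifP => _; [|case: ifP => _]; lra. Qed.

Lemma sum_mu y (f : nat -> R) :
  \sum_z mu y z * f z = lam y * f (idx y) + (1 - lam y) * f (idx y).+1.
Proof.
have [hi _] := hidx y.
rewrite (eq_bigr (fun z : 'I_L => (if (z : nat) == idx y then lam y * f (idx y) else 0)
   + (if (z : nat) == (idx y).+1 then (1 - lam y) * f (idx y).+1 else 0))).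
  have h1 : (idx y < L)%N by apply: ltn_trans hNL.
  have h2 : ((idx y).+1 < L)%N by apply: leq_ltn_trans hNL.
  by rewrite big_split /= !sum_ind.
move=> z _; rewrite /mu; case: eqP => [->|_].
  have -> : (idx y == (idx y).+1) = false by rewrite eqn_leq ltnn andbF.
  by rewrite addr0.
by case: eqP => [->|_]; rewrite ?add0r ?addr0 ?mul0r.
Qed.

Lemma mu_sum1 y : \sum_z mu y z = 1.
Proof.
have := sum_mu y (fun _ => 1); under eq_bigr do rewrite mulr1.
by rewrite !mulr1 addrC subrK.
Qed.

Lemma gap y : g (idx y).+1 - g (idx y) != 0.
Proof. by have [hi _] := hidx y; rewrite subr_eq0 gt_eqF // ginc. Qed.

Lemma mu_g y : \sum_z mu y z * g z = t y.
Proof.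
rewrite (sum_mu y g) /lam; move: (gap y) => hg; field.
by [].
Qed.

Lemma mu_var y : \sum_z mu y z * (g z - t y) ^+ 2 =
   (t y - g (idx y)) * (g (idx y).+1 - t y).
Proof.
rewrite (sum_mu y (fun i => (g i - t y) ^+ 2)) /lam; move: (gap y) => hg; field.
by [].
Qed.

Lemma mu_r y x : \sum_z mu y z * r z x = if x == x0 then t y else 1 - t y.
Proof.
rewrite /r; case: ifP => _; first exact: mu_g.
rewrite (eq_bigr (fun z => mu y z - mu y z * g z)); last by move=> *; ring.
by rewrite sumrB mu_sum1 mu_g.
Qed.

Lemma r_ge0 z x : 0 <= r z x.
Proof. by rewrite /r; have := g01 z; case: ifP => _; lra. Qed.

Lemma sum_r z : \sum_x r z x = 1.
Proof. by rewrite sumX /r eqxx (negbTE hx01) addrC subrK. Qed.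

Lemma Q_ge0 q : 0 <= Q q.
Proof. by rewrite ffunE !mulr_ge0 ?w_ge0 ?mu_ge0 ?r_ge0. Qed.

Lemma pXY_Q : pXY Q = P.
Proof.
apply/ffunP => -[x y]; rewrite ffunE /=.
rewrite (eq_bigr (fun z => w y * (mu y z * r z x))); last by move=> z _; rewrite ffunE mulrA.
rewrite -mulr_sumr mu_r; case: ifP => [/eqP->|hx]; first by rewrite w_t.
rewrite (hXall (negbT hx)) mulrBr mulr1 w_t wE; ring.
Qed.

Definition W z := \sum_y w y * mu y z.

Lemma pZ_Q z : pZ Q z = W z.
Proof.
rewrite /pZ exchange_big /W; apply: eq_bigr => y _.
under eq_bigr do rewrite ffunE /=.
by rewrite -mulr_sumr sum_r mulr1.
Qed.

Lemma pXZ_Q x z : pXZ Q (x, z) = r z x * W z.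
Proof.
rewrite ffunE /= /W mulr_sumr; apply: eq_bigr => y _; rewrite ffunE /=; ring.
Qed.

Lemma pZY_Q z y : pZY Q (z, y) = w y * mu y z.
Proof.
rewrite ffunE /=; under eq_bigr do rewrite ffunE /=.
by rewrite -mulr_sumr sum_r mulr1.
Qed.

Lemma markov_Q : markov_XZY Q.
Proof. by move=> a c b; rewrite pZ_Q pXZ_Q pZY_Q ffunE /=; ring. Qed.

Lemma Q_pmf : is_pmf Q.
Proof.
split; first exact: Q_ge0.
rewrite sum_pair sum_pair.
transitivity (\sum_x \sum_y pXY Q (x, y)).
  apply: eq_bigr => x _; rewrite exchange_big; apply: eq_bigr => y _.
  by rewrite ffunE.
rewrite pXY_Q -sum_pair; by case: hP.
Qed.

Lemma marg1_Q x : marg1 (pXZ Q) x = marg1 P x.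
Proof.
rewrite /marg1; transitivity (\sum_y pXY Q (x, y)); last by rewrite pXY_Q.
under eq_bigr do rewrite ffunE /=.
rewrite exchange_big; apply: eq_bigr => y _; by rewrite ffunE.
Qed.

Lemma marg2_Q z : marg2 (pXZ Q) z = W z.
Proof. by rewrite /marg2; under eq_bigr do rewrite pXZ_Q; rewrite -mulr_suml sum_r mul1r. Qed.

Lemma W_ge0 z : 0 <= W z.
Proof. by rewrite sumr_ge0 // => y _; rewrite mulr_ge0 ?w_ge0 ?mu_ge0. Qed.

Lemma mi_Q : mutinfo (pXZ Q) =
  \sum_x \sum_y w y * \sum_z mu y z * ell (r z x) (marg1 P x).
Proof.
rewrite /mutinfo sum_pair; apply: eq_bigr => x _.
under eq_bigr do rewrite /= marg1_Q marg2_Q pXZ_Q mi_term ?r_ge0 ?W_ge0 // /W mulr_suml.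
rewrite exchange_big; apply: eq_bigr => y _; rewrite mulr_sumr.
by apply: eq_bigr => z _; rewrite mulrA.
Qed.

Definition sXY y x := if x == x0 then t y else 1 - t y.

Lemma P_ws x y : P (x, y) = sXY y x * w y.
Proof.
have := congr1 (fun F : {ffun X * Y -> R} => F (x, y)) pXY_Q; rewrite /= ffunE /= => <-.
rewrite (eq_bigr (fun z => w y * (mu y z * r z x))); last by move=> z _; rewrite ffunE mulrA.
by rewrite -mulr_sumr mu_r mulrC.
Qed.

Lemma sXY_ge0 y x : 0 <= sXY y x.
Proof. by rewrite /sXY; have := t01 y; case: ifP => _; lra. Qed.

Lemma mi_P : mutinfo P = \sum_x \sum_y w y * ell (sXY y x) (marg1 P x).
Proof.
rewrite /mutinfo sum_pair; apply: eq_bigr => x _; apply: eq_bigr => y _ /=.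
have -> : marg2 P y = w y by [].
by rewrite P_ws mi_term ?sXY_ge0 ?w_ge0.
Qed.

Variable e : R.
Hypothesis e0 : 0 <= e.
Hypothesis gC : forall i, (i < N)%N -> forall s, g i <= s <= g i.+1 ->
  (s - g i) * (g i.+1 - s) <= e * s * (1 - s).

Lemma var_bound y : \sum_z mu y z * (g z - t y) ^+ 2 <= e * t y * (1 - t y).
Proof. by rewrite mu_var; have [hi h] := hidx y; apply: gC. Qed.

Lemma marg1_ge x y : P (x, y) <= marg1 P x.
Proof.
rewrite /marg1 (bigD1 y) //= lerDl sumr_ge0 // => *; exact: P0.
Qed.

Lemma B0 y : (if 0 < t y then \sum_z mu y z * ((r z x0 - t y) ^+ 2 / t y) else 0)
   <= e * (1 - t y).
Proof.
have := t01 y => ht; case: ifP => tp; last by rewrite mulr_ge0 //; lra.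
rewrite (eq_bigr (fun z => mu y z * (g z - t y) ^+ 2 / t y)); last first.
  by move=> z _; rewrite /r eqxx mulrA.
rewrite -mulr_suml ler_pdivrMr //; apply: le_trans (var_bound y) _.
by rewrite -mulrA (mulrC (t y)) mulrA.
Qed.

Lemma B1 y : (if 0 < 1 - t y then
    \sum_z mu y z * ((r z x1 - (1 - t y)) ^+ 2 / (1 - t y)) else 0)
   <= e * t y.
Proof.
have := t01 y => ht; case: ifP => tp; last by rewrite mulr_ge0 //; lra.
rewrite (eq_bigr (fun z => mu y z * (g z - t y) ^+ 2 / (1 - t y))); last first.
  move=> z _; rewrite /r (negbTE hx01) mulrA; congr (_ * _ / _).
  by rewrite -sqrrN; congr (_ ^+ 2); ring.
by rewrite -mulr_suml ler_pdivrMr //; apply: le_trans (var_bound y) _.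
Qed.

Lemma D_bound y : 0 < w y ->
  \sum_x (\sum_z mu y z * ell (r z x) (marg1 P x) - ell (sXY y x) (marg1 P x)) <= e.
Proof.
move=> wp; rewrite sumX.
have J : forall x, \sum_z mu y z * ell (r z x) (marg1 P x) - ell (sXY y x) (marg1 P x) <=
   (if 0 < sXY y x then \sum_z mu y z * ((r z x - sXY y x) ^+ 2 / sXY y x) else 0).
  move=> x; have := @jensen_chi2 R _ (mu y) (fun z => r z x) (marg1 P x) (@mu_ge0 y) (mu_sum1 y) (r_ge0^~ x).
  rewrite mu_r -/(sXY y x); apply => sp.
  apply: lt_le_trans (marg1_ge x y); rewrite P_ws; exact: mulr_gt0.
have J0 := J x0; have J1 := J x1.
rewrite /sXY eqxx in J0; rewrite /sXY (negbTE hx01) in J1.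
rewrite /sXY eqxx (negbTE hx01); apply: le_trans (lerD J0 J1) _.
apply: le_trans (lerD (B0 y) (B1 y)) _; lra.
Qed.

Lemma sum_w : \sum_y w y = 1.
Proof. by rewrite /w exchange_big -sum_pair; case: hP. Qed.

Lemma main_bound : mutinfo (pXZ Q) - mutinfo P <= e.
Proof.
rewrite mi_Q mi_P -sumrB.
have -> : \sum_x (\sum_y w y * \sum_z mu y z * ell (r z x) (marg1 P x) -
     \sum_y w y * ell (sXY y x) (marg1 P x)) =
   \sum_y w y * \sum_x (\sum_z mu y z * ell (r z x) (marg1 P x) - ell (sXY y x) (marg1 P x)).
  under eq_bigr do rewrite -sumrB.
  rewrite exchange_big; apply: eq_bigr => y _; rewrite mulr_sumr; apply: eq_bigr => x _.
  by rewrite mulrBr.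
apply: le_trans (_ : \sum_y w y * e <= _).
  apply: ler_sum => y _; have [w00|wn0] := eqVneq (w y) 0.
    by rewrite w00 !mul0r.
  have wp : 0 < w y by rewrite lt_def wn0 w_ge0.
  by rewrite ler_pM2l // D_bound.
by rewrite -mulr_suml sum_w mul1r.
Qed.

Lemma exists_Q : exists Q : {ffun X * 'I_L * Y -> R},
    [/\ is_pmf Q, pXY Q = P, markov_XZY Q & mutinfo (pXZ Q) - mutinfo P <= e].
Proof. exists Q; split; [exact: Q_pmf | exact: pXY_Q | exact: markov_Q | exact: main_bound]. Qed.

End Main.

Lemma ivt (R : realType) (g : nat -> R) (N : nat) (s : R) :
  g 0%N <= s -> s <= g N -> (0 < N)%N -> exists i, (i < N)%N /\ g i <= s <= g i.+1.
Proof.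
move=> h0; elim: N => // n IH hn _.
case: n IH hn => [|n] IH hn; first by exists 0%N; rewrite h0 hn.
case: (leP s (g n.+1)) => h.
  by have [i [hi hh]] := IH h isT; exists i; split => //; apply: ltnW.
by exists n.+1; split => //; rewrite hn andbT ltW.
Qed.



Lemma construct (R : realType) (X Y : finType) (P : {ffun X * Y -> R}) (L N : nat)
  (g : nat -> R) (e : R) (x0 x1 : X) :
  x1 != x0 -> (forall x, x != x0 -> x = x1) -> is_pmf P -> (N < L)%N -> (0 < N)%N ->
  g 0%N = 0 -> g N = 1 -> (forall i, 0 <= g i <= 1) ->
  (forall i, (i < N)%N -> g i < g i.+1) -> 0 <= e ->
  (forall i, (i < N)%N -> forall s, g i <= s <= g i.+1 ->
     (s - g i) * (g i.+1 - s) <= e * s * (1 - s)) ->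
  exists Q : {ffun X * 'I_L * Y -> R},
    [/\ is_pmf Q, pXY Q = P, markov_XZY Q & mutinfo (pXZ Q) - mutinfo P <= e].
Proof.
move=> h01 hall hP hNL hN g0 gN g01 ginc e0 gC.
have : forall y, exists i : nat, (i < N)%N /\ g i <= t P x0 y <= g i.+1.
  move=> y; have /andP[a b] := t01 h01 hall hP y.
  by apply: ivt => //; rewrite ?g0 ?gN.
case/fin_all_exists => idx hidx.
apply: (@exists_Q R X Y P L N g x0 x1 (fun y => idx y)) => //.

Qed.

Lemma C_suff (R : realType) (a b e s : R) : 0 <= a -> a <= s -> s <= b -> b <= 1 -> 0 <= e ->
  (a = 0 /\ b <= e) \/ (b = 1 /\ 1 - a <= e) \/ ((b - a) ^+ 2 <= 4 * e * a * (1 - b)) ->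
  (s - a) * (b - s) <= e * s * (1 - s).
Proof.
move=> a0 as_ sb b1 e0 [[-> be]|[[-> ae]|h]].
- rewrite subr0 -mulrA; have s0 : 0 <= s by lra.
  rewrite mulrCA ler_wpM2l //.
  case: (leP e 1) => he; nra.
- have h : s - a <= e * s by case: (leP e 1) => he; nra.
  have h' : 0 <= 1 - s by lra.
  have := ler_wpM2r h' h; lra.
- have h1 : (s - a) * (b - s) <= (b - a) ^+ 2 / 4.
    rewrite ler_pdivlMr; last by lra.
    have : 0 <= (2 * s - a - b) ^+ 2 by apply: sqr_ge0.
    lra.
  have h2 : e * a * (1 - b) <= e * s * (1 - s).
    rewrite -!mulrA ler_wpM2l //; apply: ler_pM; lra.
  apply: le_trans h1 _; rewrite ler_pdivrMr; last by lra.
  lra.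
Qed.

Lemma mid_cond (R : realType) (c u : R) : 0 < c -> 1 <= u -> (u + 1) ^+ 2 * c <= 1 / 2 ->
  ((u + 1) ^+ 2 * c - u ^+ 2 * c) ^+ 2 <= 4 * (16 * c) * (u ^+ 2 * c) * (1 - (u + 1) ^+ 2 * c).
Proof.
move=> c0 u1 hb.
have -> : (u + 1) ^+ 2 * c - u ^+ 2 * c = (2 * u + 1) * c by ring.
have h1 : (2 * u + 1) ^+ 2 <= 32 * u ^+ 2 by nra.
apply: le_trans (_ : 32 * u ^+ 2 * c ^+ 2 <= _).
  by rewrite exprMn ler_wpM2r // sqr_ge0.
have -> : 4 * (16 * c) * (u ^+ 2 * c) * (1 - (u + 1) ^+ 2 * c) =
   (32 * u ^+ 2 * c ^+ 2) * (2 * (1 - (u + 1) ^+ 2 * c)) by ring.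
rewrite ler_peMr ?mulr_ge0 ?sqr_ge0 //; try lra.
all: try lra.
Qed.


Section Grid2.
Variables (R : realType) (k : nat).
Hypothesis k1 : (1 <= k)%N.

Definition cc : R := (2 * (k%:R) ^+ 2)^-1.
Definition gg (i : nat) : R :=
  if (i <= k)%N then (i%:R) ^+ 2 * cc else 1 - ((2 * k - i)%:R) ^+ 2 * cc.

Lemma cc_gt0 : 0 < cc.
Proof. by rewrite invr_gt0 mulr_gt0 // exprn_gt0 // ltr0n. Qed.

Lemma kc : (k%:R) ^+ 2 * cc = 1 / 2.
Proof.
rewrite /cc; have : (k%:R : R) != 0 by rewrite pnatr_eq0 -lt0n.
by move=> h; field.
Qed.

Lemma sq_bound n : (n <= k)%N -> 0 <= (n%:R) ^+ 2 * cc <= 1 / 2.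
Proof.
move=> hn; have cp := ltW cc_gt0.
rewrite mulr_ge0 ?sqr_ge0 //= -kc.
by rewrite ler_wpM2r // -!natrX ler_nat leq_exp2r.
Qed.

Lemma gg_up i : (k <= i)%N -> gg i = 1 - ((2 * k - i)%:R) ^+ 2 * cc.
Proof.
rewrite /gg; case: ifP => // hik hki.
have -> : i = k by apply/eqP; rewrite eqn_leq hik hki.
have -> : (2 * k - k = k)%N by lia.
rewrite kc; lra.
Qed.

Lemma gg01 i : 0 <= gg i <= 1.
Proof.
rewrite /gg; case: ifP => h.
  by have := sq_bound h; lra.
have : (2 * k - i <= k)%N by lia.
by move/sq_bound; lra.
Qed.

Lemma gg_inc i : (i < 2 * k)%N -> gg i < gg i.+1.
Proof.
move=> hi; have cp := cc_gt0.
case: (leqP i.+1 k) => h.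
  rewrite /gg h ltnW // ltr_pM2r // -!natrX ltr_nat ltn_exp2r //.
rewrite !gg_up; [|lia|lia].
rewrite ltrD2l ltrN2 ltr_pM2r // -!natrX ltr_nat ltn_exp2r //; lia.
Qed.

Lemma ggC i : (i < 2 * k)%N -> forall s, gg i <= s <= gg i.+1 ->
  (s - gg i) * (gg i.+1 - s) <= 16 * cc * s * (1 - s).
Proof.
move=> hi s /andP[h1 h2]; have cp := cc_gt0.
have := gg01 i; have := gg01 i.+1 => /andP[b0 b1] /andP[a0 a1].
apply: C_suff => //; first by rewrite mulr_ge0 // ltW.
case: (leqP i.+1 k) => h.
  have ga : gg i = (i%:R) ^+ 2 * cc by rewrite /gg ltnW.
  have gb : gg i.+1 = (i%:R + 1) ^+ 2 * cc by rewrite /gg h natr1.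
  clear a0 a1 b0 b1.
  case: i hi h h1 h2 ga gb => [|i] hi h h1 h2 ga gb.
    left; rewrite ga gb; split; first by rewrite expr0n mul0r.
    rewrite add0r expr1n mul1r; lra.
  right; right; rewrite ga gb; apply: mid_cond => //.
    by rewrite ler1n.
  by rewrite natr1; have := sq_bound h; lra.
have [j hj] : exists j, (2 * k - i.+1 = j)%N by eexists.
have ga : gg i = 1 - (j%:R + 1) ^+ 2 * cc.
  by rewrite gg_up; [|lia]; rewrite natr1; congr (1 - (_ ^+ 2 * _)); congr (_%:R); lia.
have gb : gg i.+1 = 1 - (j%:R) ^+ 2 * cc by rewrite gg_up; [|lia]; rewrite hj.
clear a0 a1 b0 b1.
case: j hj ga gb => [|j] hj ga gb.
  right; left; rewrite ga gb; split; first by rewrite expr0n mul0r subr0.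
  rewrite add0r expr1n mul1r; lra.
right; right; rewrite ga gb.
have -> : (1 - (j.+1%:R) ^+ 2 * cc - (1 - (j.+1%:R + 1) ^+ 2 * cc)) =
   ((j.+1%:R + 1) ^+ 2 * cc - (j.+1%:R) ^+ 2 * cc) by ring.
have -> : 4 * (16 * cc) * (1 - (j.+1%:R + 1) ^+ 2 * cc) * (1 - (1 - (j.+1%:R) ^+ 2 * cc)) =
   4 * (16 * cc) * ((j.+1%:R) ^+ 2 * cc) * (1 - (j.+1%:R + 1) ^+ 2 * cc) by ring.
apply: mid_cond => //; first by rewrite ler1n.
rewrite natr1; have : (j.+2 <= k)%N by lia.
by move/sq_bound; lra.
Qed.

End Grid2.

Theorem theorem1 (R : realType) (X Y : finType) (P : {ffun X * Y -> R})
  (hX : #|X| = 2%N) (hP : is_pmf P) (L : nat) (hL : (2 <= L)%N) :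
  exists Q : {ffun X * 'I_L * Y -> R},
    [/\ is_pmf Q, pXY Q = P, markov_XZY Q &
        mutinfo (pXZ Q) - mutinfo P <= 128 / (L%:R ^+ 2)].
Proof.
have : (0 < #|X|)%N by rewrite hX.
case/card_gt0P => x0 _.
have : (0 < #|predC1 x0|)%N by rewrite cardC1 hX.
case/card_gt0P => x1; rewrite inE => h01.
have hall : forall x, x != x0 -> x = x1.
  move=> x hx; apply/eqP; apply/negPn/negP => hx1.
  have := cardD1 x1 (predC1 x0); rewrite cardC1 hX inE h01 /=.
  have : (0 < #|[predD1 predC1 x0 & x1]|)%N.
    by apply/card_gt0P; exists x; rewrite !inE hx1 hx.
  move=> a /eqP; rewrite -{1}(addn0 1%N) eqn_add2l eq_sym => /eqP c0; by move: a; rewrite c0.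
have Lp : (0 < L%:R :> R) by rewrite ltr0n; lia.
case: (leqP L 2) => hL2.
  have L2 : L = 2%N by lia.
  pose g1 := fun i : nat => if i == 0%N then 0 else 1 : R.
  have g01 : forall i, 0 <= g1 i <= 1.
    by move=> i; rewrite /g1; case: ifP => _; apply/andP; split; lra.
  have ginc : forall i, (i < 1)%N -> g1 i < g1 i.+1.
    by case=> // _; rewrite /g1 /=; lra.
  have gC : forall i, (i < 1)%N -> forall s, g1 i <= s <= g1 i.+1 ->
      (s - g1 i) * (g1 i.+1 - s) <= 1 * s * (1 - s).
    by case=> // _ s _; rewrite /g1 /= mul1r subr0.
  have [Q [h1 h2 h3 h4]] := @construct R X Y P L 1 g1 1 x0 x1
     h01 hall hP ltac:(lia) isT erefl erefl g01 ginc ler01 gC.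
  exists Q; split => //; apply: le_trans h4 _.
  by rewrite L2 ler_pdivlMr ?exprn_gt0 ?ltr0n // mul1r -natrX ler_nat.
set k := ((L.-1) %/ 2)%N.
have k1 : (1 <= k)%N by rewrite /k; lia.
have [Q [h1 h2 h3 h4]] := @construct R X Y P L (2 * k) (gg R k) (16 * cc R k) x0 x1
   h01 hall hP ltac:(rewrite /k; lia) ltac:(lia)
   ltac:(by rewrite /gg leq0n expr2 mulr0n !mul0r)
   ltac:(by rewrite gg_up ?subnn ?expr2 ?mulr0n ?mul0r ?subr0 //; lia)
   (@gg01 R k k1) (@gg_inc R k k1)
   ltac:(by rewrite mulr_ge0 // ltW // cc_gt0)
   (@ggC R k k1).
exists Q; split => //; apply: le_trans h4 _.
have hk : (L <= 4 * k)%N by rewrite /k; lia.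
have kp : (0 < k%:R :> R) by rewrite ltr0n.
rewrite /cc ler_pdivlMr ?exprn_gt0 //.
have : (L%:R ^+ 2 : R) <= 16 * k%:R ^+ 2.
  by rewrite -!natrX -natrM ler_nat; nia.
move=> h; rewrite mulrAC ler_pdivrMr ?mulr_gt0 ?exprn_gt0 //; lra.
Qed.
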